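(* Let $p>0$ and let $u\in\mathcal{L}(\ell_p;\ell_p)$ with $u\neq0$. Let $(\mathbb{N}_k)_{k=1}^\infty$ be a partition of $\mathbb{N}$ into infinite pairwise disjoint subsets, $\mathbb{N}_k=\{n^{(k)}_1<n^{(k)}_2<\cdots\}$, and for each $k$ define $u_k\in\mathcal{L}(\ell_p;\ell_p)$ by $u_k(x)_{n^{(k)}_i}=u(x)_i$ for all $i\in\mathbb{N}$ and $u_k(x)_m=0$ for $m\notin\mathbb{N}_k$. Then the map $T:\ell_p\to\mathcal{L}(\ell_p;\ell_p)$ given by $T((a_k)_{k=1}^\infty)=\sum_{k=1}^\infty a_k u_k$ is well defined, linear and injective.
   Context: For $0<p<1$, $\ell_p$ is the $p$-Banach space of scalar sequences with $\|x\|_p=(\sum_k|x_k|^p)^{1/p}<\infty$; for $p\ge1$ it is the usual Banach space. $\mathcal{L}(\ell_p;\ell_p)$ is the space of bounded linear operators on $\ell_p$ with the operator (quasi-)norm, and the series defining $T$ is understood as convergent in this (quasi-)norm. *)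

(* Defs.v *)
From HB Require Import structures.
From mathcomp Require Import all_boot all_order all_algebra.
From mathcomp Require Import all_classical all_reals all_analysis.
Set Implicit Arguments. Unset Strict Implicit. Unset Printing Implicit Defensive.
Import Order.TTheory GRing.Theory Num.Theory.
Import numFieldNormedType.Exports.
Local Open Scope classical_set_scope.
Local Open Scope ring_scope.

Section Lp.
Variable R : realType.

(* x belongs to ell_p : sum_k |x_k|^p < oo (nonnegative terms, so
   convergence of the partial sums) *)
Definition in_lp (p : R) (x : nat -> R) : Prop :=
  cvgn (series (fun k => `|x k| `^ p)).

Definition lpnorm (p : R) (x : nat -> R) : R :=
  (limn (series (fun k => `|x k| `^ p))) `^ (p^-1).

(* u is a bounded linear operator on ell_p (only its values on ell_p matter) *)
Definition bounded_op (p : R) (u : (nat -> R) -> (nat -> R)) : Prop :=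
  [/\ forall x, in_lp p x -> in_lp p (u x),
      forall (a b : R) x y, in_lp p x -> in_lp p y ->
        u (fun m => a * x m + b * y m) = (fun m => a * u x m + b * u y m)
    & exists C : R, forall x, in_lp p x -> lpnorm p (u x) <= C * lpnorm p x].

Definition opnorm (p : R) (u : (nat -> R) -> (nat -> R)) : R :=
  sup [set lpnorm p (u x) | x in [set x | in_lp p x /\ lpnorm p x <= 1]].

Definition op_series_converges_to (p : R) (a : nat -> R)
    (v : nat -> (nat -> R) -> (nat -> R)) (S : (nat -> R) -> (nat -> R)) : Prop :=
  (fun n => opnorm p (fun x m => S x m - \sum_(0 <= k < n) a k * v k x m))
    @ \oo --> 0.

End Lp.

(* Main.v *)
Require Import Defs.
From HB Require Import structures.
From mathcomp Require Import all_boot all_order all_algebra.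
From mathcomp Require Import all_classical all_reals all_analysis.
Import Order.TTheory GRing.Theory Num.Theory.
Import numFieldNormedType.Exports.
From mathcomp Require Import ring.
Local Open Scope classical_set_scope.
Local Open Scope ring_scope.

Section H.
Variable R : realType.

Lemma prod_series (A B : nat -> R) (f : nat -> nat * nat) (idx : nat -> nat -> nat) :
  (forall m, idx (f m).1 (f m).2 = m) -> (forall k i, f (idx k i) = (k, i)) ->
  (forall n, 0 <= A n) -> (forall n, 0 <= B n) ->
  cvgn (series A) -> cvgn (series B) ->
  cvgn (series (fun m => A (f m).1 * B (f m).2)) /\
  limn (series (fun m => A (f m).1 * B (f m).2)) = limn (series A) * limn (series B).
Proof.
move=> fK idxK A0 B0 cA cB.
have serE (C : nat -> R) : cvgn (series C) ->
    (\sum_(k <oo) (C k)%:E = (limn (series C))%:E)%E.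
  move=> cC; rewrite -EFin_lim //; apply: congr_lim; apply/funext => n /=.
  by rewrite sumEFin.
set g := fun m => A (f m).1 * B (f m).2.
have g0 m : 0 <= g m by rewrite /g mulr_ge0.
have key : (\sum_(m <oo) (g m)%:E = (limn (series A) * limn (series B))%:E)%E.
  rewrite nneseries_esumT; last by move=> m; rewrite lee_fin.
  rewrite (reindex_esum setT setT (fun ki : nat * nat => idx ki.1 ki.2)); last first.
    split.
    - by [].
    - by move=> [k i] [k' i'] _ _ /= /(congr1 f); rewrite !idxK.
    - by move=> m _; exists (f m) => //; rewrite fK.
  rewrite (_ : setT = setT `*`` (fun=> setT)); last by apply/seteqP; split.
  rewrite (eq_esum (b := fun ki => (A ki.1 * B ki.2)%:E)); last first.
    by move=> [k i] _; rewrite /g idxK.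
  rewrite -(@esum_esum R nat nat setT (fun=> setT) (fun k i => (A k * B i)%:E)); last first.
    by move=> i j _ _; rewrite lee_fin mulr_ge0.
  rewrite [X in (_ = X)%E]/= ; set L := esum _ _.
  have -> : L = \esum_(k in setT) (\sum_(i <oo) (A k * B i)%:E)%E.
    apply: eq_esum => k _; rewrite nneseries_esumT //.
    by move=> i; rewrite lee_fin mulr_ge0.
  rewrite -nneseries_esumT; last first.
    by move=> k; apply: nneseries_ge0 => i _ _; rewrite lee_fin mulr_ge0.
  transitivity (\sum_(k <oo) ((A k)%:E * (limn (series B))%:E))%E.
    apply: eq_eseriesr => k _; rewrite -serE //.
    under eq_eseriesr do rewrite EFinM.
    by rewrite nneseriesZl // => i _; rewrite lee_fin.
  under eq_eseriesr do rewrite muleC.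
  rewrite nneseriesZl; last by move=> i _; rewrite lee_fin.
  by rewrite serE // -EFinM mulrC.
have cg : cvgn (series g) by apply: nnseries_is_cvg => //; rewrite key ltry.
by split => //; have := serE g cg; rewrite key => -[].
Qed.

Lemma lim_ge0 (A : nat -> R) : (forall n, 0 <= A n) -> cvgn (series A) ->
  0 <= limn (series A).
Proof.
move=> A0 cA; apply: limr_ge => //; near=> n.
by rewrite /series /=; apply: sumr_ge0 => i _.
Unshelve. all: by end_near.
Qed.

Lemma prod_lp (p : R) (hp : 0 < p) (a y : nat -> R) (f : nat -> nat * nat)
  (idx : nat -> nat -> nat) :
  (forall m, idx (f m).1 (f m).2 = m) -> (forall k i, f (idx k i) = (k, i)) ->
  in_lp p a -> in_lp p y ->
  in_lp p (fun m => a (f m).1 * y (f m).2) /\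
  lpnorm p (fun m => a (f m).1 * y (f m).2) = lpnorm p a * lpnorm p y.
Proof.
move=> fK idxK ca cy.
have E : (fun m => `|a (f m).1 * y (f m).2| `^ p) =
         (fun m => `|a (f m).1| `^ p * `|y (f m).2| `^ p).
  by apply/funext => m; rewrite normrM powRM.
have [c l] := prod_series (fun k => `|a k| `^ p) (fun k => `|y k| `^ p) _ _ fK idxK (fun n => powR_ge0 _ _) (fun n => powR_ge0 _ _) ca cy.
rewrite /in_lp /lpnorm E; split => //.
by rewrite l powRM //; apply: lim_ge0 => // n; exact: powR_ge0.
Qed.

Lemma in_lp0 (p : R) (hp : 0 < p) : in_lp p (fun _ => 0) /\ lpnorm p (fun _ => 0) = 0.
Proof.
have E : series (fun k : nat => `|(0:R)| `^ p) = fun _ => 0.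
  apply/funext => n; rewrite seriesEnat /=; apply: big1 => i _.
  by rewrite normr0 powR0 // gt_eqF.
rewrite /in_lp /lpnorm E; split; first exact: is_cvg_cst.
by rewrite lim_cst // powR0 // invr_eq0 gt_eqF.
Qed.

Lemma sum_single (n k : nat) (c : R) :
  \sum_(0 <= k' < n) (if k' == k then c else 0) = if (k < n)%N then c else 0.
Proof.
elim: n => [|n IH]; first by rewrite big_geq.
rewrite big_nat_recr //= IH.
case: (ltngtP k n) => h.
- have -> : (k < n.+1)%N by apply: ltnW.
  by rewrite addr0.
- have -> : (k < n.+1)%N = false by apply/negbTE; rewrite -leqNgt.
  by rewrite addr0.
- by subst; rewrite ltnSn add0r.
Qed.

Lemma tail_lp (p : R) (hp : 0 < p) (a : nat -> R) (n : nat) : in_lp p a ->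
  in_lp p (fun k => if (n <= k)%N then a k else 0) /\
  limn (series (fun k => `|(if (n <= k)%N then a k else 0)| `^ p)) =
  limn (series (fun k => `|a k| `^ p)) - series (fun k => `|a k| `^ p) n.
Proof.
move=> ca.
set A := fun k => `|a k| `^ p.
set B := fun k => `|(if (n <= k)%N then a k else 0)| `^ p.
have seqE N : (n <= N)%N -> series B N = series A N - series A n.
  move=> nN; rewrite sub_series_geq // seriesEnat /= (@big_cat_nat _ _ _ n 0 N _ _ (leq0n n) nN) /=.
  rewrite big_nat_cond big1 ?add0r; last first.
    move=> i /andP[/andP[_ h] _]; rewrite /B.
    by rewrite leqNgt h /= normr0 powR0 // gt_eqF.
  apply: eq_big_nat => i /andP[h _]; by rewrite /B h.
have cv : series B @ \oo --> limn (series A) - series A n.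
  have h1 : (fun N => series A N - series A n) @ \oo --> limn (series A) - series A n.
    by apply: cvgB; [exact: ca|exact: cvg_cst].
  apply: cvg_trans h1.
  apply: near_eq_cvg; near=> N; rewrite /= seqE //; near: N; exact: nbhs_infty_ge.
split; first by apply/cvg_ex; eexists; exact: cv.
exact: cvg_lim.
Unshelve. all: by end_near.
Qed.

Lemma powR_cvg0' (q : R) (t : nat -> R) : 0 < q -> (forall n, 0 <= t n) ->
  t @ \oo --> 0 -> (fun n => t n `^ q) @ \oo --> 0.
Proof.
move=> q0 t0 /cvgrPdist_lt ht; apply/cvgrPdist_lt => e e0.
have e' : 0 < e `^ q^-1 by apply: powR_gt0.
apply: filterS (ht _ e') => n.
rewrite !sub0r !normrN !ger0_norm //; last exact: powR_ge0.
move=> h.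
have := gt0_ltr_powR q0 _ _ h; rewrite -powRrM mulVf ?gt_eqF // powRr1 ?(ltW e0) //.
apply; rewrite nnegrE //; exact: powR_ge0.
Qed.

End H.

Theorem lemma2p1 (R : realType) (p : R) (hp : 0 < p)
  (u : (nat -> R) -> (nat -> R))
  (hu : bounded_op p u)
  (hu0 : exists x, in_lp p x /\ u x <> (fun _ => 0))
  (idx : nat -> nat -> nat)
  (* idx k i = n^(k)_i : increasing enumeration of N_k *)
  (hinc : forall k i j, (i < j)%N -> (idx k i < idx k j)%N)
  (* the N_k are pairwise disjoint and cover N *)
  (hpart : forall m : nat, exists! ki : nat * nat, idx ki.1 ki.2 = m)
  (uk : nat -> (nat -> R) -> (nat -> R))
  (huk1 : forall k x i, in_lp p x -> uk k x (idx k i) = u x i)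
  (huk2 : forall k x m, in_lp p x -> (forall i, idx k i <> m) -> uk k x m = 0) :
  exists T : (nat -> R) -> ((nat -> R) -> (nat -> R)),
    (* well defined: the series converges in L(ell_p; ell_p) to T a *)
    (forall a, in_lp p a ->
       bounded_op p (T a) /\ op_series_converges_to p a uk (T a)) /\
    (* linear *)
    (forall (s t : R) a b, in_lp p a -> in_lp p b ->
       forall x, in_lp p x ->
         T (fun k => s * a k + t * b k) x = (fun m => s * T a x m + t * T b x m)) /\
    (* injective *)
    (forall a b, in_lp p a -> in_lp p b ->
       (forall x, in_lp p x -> T a x = T b x) -> a = b).
Proof.
have pn0 : p != 0 by rewrite gt_eqF.
have hex : forall m, exists ki : nat * nat, idx ki.1 ki.2 = m.
  by move=> m; have [ki [h _]] := hpart m; exists ki.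
have [f hf] := choice hex.
have idxK k i : f (idx k i) = (k, i).
  have [ki [_ u1]] := hpart (idx k i).
  by rewrite -(u1 _ (hf _)); exact: (u1 (k, i) erefl).
case: hu => hul hulin [C hC].
have hb x : in_lp p x -> lpnorm p x <= 1 -> lpnorm p (u x) <= `|C|.
  move=> hx hx1; apply: le_trans (hC x hx) _.
  have l0 : 0 <= lpnorm p x by apply: powR_ge0.
  apply: (@le_trans _ _ (`|C| * lpnorm p x)).
    by apply: ler_wpM2r => //; exact: ler_norm.
  by rewrite -{2}(mulr1 `|C|); apply: ler_wpM2l.
pose T (a : nat -> R) x m := a (f m).1 * u x (f m).2.
have Tlp a x : in_lp p a -> in_lp p x ->
    in_lp p (T a x) /\ lpnorm p (T a x) = lpnorm p a * lpnorm p (u x).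
  move=> ha hx; exact: (@prod_lp R p hp a (u x) f idx hf idxK ha (hul x hx)).
have Tlin a : forall (al be : R) x y, in_lp p x -> in_lp p y ->
    T a (fun m => al * x m + be * y m) = (fun m => al * T a x m + be * T a y m).
  move=> al be x y hx hy; apply/funext => m; rewrite /T hulin //=; ring.
exists T; split; [|split].
- move=> a ha; split.
  + split.
    * by move=> x hx; case: (Tlp a x ha hx).
    * move=> al be x y hx hy; exact: Tlin.
    * exists (lpnorm p a * C) => x hx; rewrite (Tlp a x ha hx).2 -mulrA.
      by apply: ler_wpM2l; [exact: powR_ge0 | exact: hC].
  + rewrite /op_series_converges_to.
    pose an n := fun k => if (n <= k)%N then a k else 0.
    have Dn n x : in_lp p x ->
        (fun m => T a x m - \sum_(0 <= k < n) a k * uk k x m) = T (an n) x.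
      move=> hx; apply/funext => m; rewrite -(hf m).
      move: (f m).1 (f m).2 => k i.
      rewrite /T idxK /=.
      rewrite (eq_big_nat _ _ (F2 := fun k' => if k' == k then a k * u x i else 0)); last first.
        move=> k' _; case: eqP => [->|ne]; first by rewrite huk1.
        rewrite huk2 ?mulr0 // => j /(congr1 f); rewrite !idxK => -[e _]; exact: ne e.
      rewrite sum_single /an; case: leqP => h.
        by rewrite subr0.
      by rewrite subrr mul0r.
    have tl n := @tail_lp R p hp a n ha.
    have opb n : 0 <= opnorm p (fun x m => T a x m - \sum_(0 <= k < n) a k * uk k x m)
                 <= lpnorm p (an n) * `|C|.
      rewrite /opnorm.
      set S := [set _ | _ in _].
      have Sx0 : S (lpnorm p (fun m => T a (fun _ => 0) m -
                   \sum_(0 <= k < n) a k * uk k (fun _ => 0) m)).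
        by exists (fun _ => 0) => //; split; [exact: (@in_lp0 R p hp).1 | rewrite (@in_lp0 R p hp).2].
      have ub : ubound S (lpnorm p (an n) * `|C|).
        move=> _ [x [hx hx1] <-] /=; rewrite Dn // (Tlp _ _ (tl n).1 hx).2.
        by apply: ler_wpM2l; [exact: powR_ge0 | exact: hb].
      apply/andP; split.
        apply: le_trans (sup_upper_bound _ Sx0); first exact: powR_ge0.
        by split; [eexists; exact: Sx0 | exists (lpnorm p (an n) * `|C|); exact: ub].
      by apply: ge_sup => //; eexists; exact: Sx0.
    apply: (squeeze_cvgr (f := fun=> 0) (h := fun n => lpnorm p (an n) * `|C|)).
    * by apply: nearW => n; exact: opb.
    * exact: cvg_cst.
    rewrite -(mul0r `|C|).
    suff H : (fun n => lpnorm p (an n)) @ \oo --> 0 by exact: (cvgMr_tmp H).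
    rewrite /lpnorm; apply: powR_cvg0'; first by rewrite invr_gt0.
      by move=> n; apply: lim_ge0; [move=> k; exact: powR_ge0 | exact: (tl n).1].
    have -> : (fun n => limn (series (fun k => `|an n k| `^ p))) =
              (fun n => limn (series (fun k => `|a k| `^ p)) - series (fun k => `|a k| `^ p) n).
      by apply/funext => n; exact: (tl n).2.
    rewrite -(subrr (limn (series (fun k => `|a k| `^ p)))).
    by apply: cvgB; [exact: cvg_cst | exact: ha].
- move=> s t a b ha hb' x hx; apply/funext => m; rewrite /T; ring.
- move=> a b ha hb' H.
  case: hu0 => x0 [hx0 nz].
  have [i ui] : exists i, u x0 i != 0.
    case: (pselect (exists i, u x0 i != 0)) => // h; exfalso; apply: nz.
    apply/funext => i; apply/eqP; apply/negPn/negP => ne; apply: h; exists i; exact: ne.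
  apply/funext => k.
  have := congr1 (fun h => h (idx k i)) (H x0 hx0); rewrite /T /= idxK /=.
  exact: (mulIf ui).
Qed.
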